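(* Let $h>0$, $P\ge 0$, $0<\zeta\le 1$, $\sigma_A^2\ge 0$, $\sigma_{\rm cov}^2>0$, $P_S>0$, let $N\ge1$ be an integer, and let $\mathcal{A}_N=\{0,1/N,2/N,\dots,1\}$. With $f(\rho)=\log_2\!\left(1+\frac{(1-\rho)hP}{(1-\rho)\sigma_A^2+\sigma_{\rm cov}^2}\right)$ for $\rho\in[0,1]$, define the DPS region with circuit power $$\mathcal{C}^{\rm DPS'}(P)=\bigcup_{\alpha\in\mathcal{A}_N}\ \bigcup_{\boldsymbol\rho\in[0,1]^N}\Big\{(R,Q):\ 0\le Q\le \tfrac1N\Big(\sum_{k=1}^N\rho_k\zeta hP-\sum_{k=\alpha N+1}^{N}P_S\Big),\ \ R\le \tfrac1N\sum_{k=\alpha N+1}^N f(\rho_k)\Big\}$$ and the on-off power splitting (OPS) region with circuit power $$\mathcal{C}^{\rm OPS'}(P)=\bigcup_{\alpha\in\mathcal{A}_N}\ \bigcup_{\rho\in[0,1]}\Big\{(R,Q):\ 0\le Q\le \alpha\zeta hP+(1-\alpha)\rho\zeta hP-(1-\alpha)P_S,\ \ R\le (1-\alpha)f(\rho)\Big\}.$$ Then $\mathcal{C}^{\rm DPS'}(P)=\mathcal{C}^{\rm OPS'}(P)$ for every $P\ge0$.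
   Context: Model of a separated receiver with information-decoding circuit power $P_S$: in a block of $N$ symbols, the information decoder is switched off for the first $\alpha N$ symbols and on (consuming power $P_S$ per symbol) for the remaining $(1-\alpha)N$ symbols; in symbol $k$ a fraction $\rho_k$ of the received power $hP$ is harvested with efficiency $\zeta$ and the fraction $1-\rho_k$ is used for decoding with rate $f(\rho_k)$ when the decoder is on. $\sigma_A^2$ is antenna noise power, $\sigma_{\rm cov}^2$ is conversion noise power. OPS is the special case $\rho_k=1$ for $k\le\alpha N$ and $\rho_k=\rho$ for $k>\alpha N$. *)

(* Defs.v *)
From Stdlib Require Import Reals Lra.
Open Scope R_scope.

Definition log2 (x : R) : R := ln x / ln 2.

Definition frate (h P sA2 scov2 rho : R) : R :=
  log2 (1 + (1 - rho) * h * P / ((1 - rho) * sA2 + scov2)).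

(* sumk a b g = sum_{k=a+1}^{b} g k  (empty, i.e. 0, if b <= a) *)
Fixpoint sumk (a b : nat) (g : nat -> R) : R :=
  match b with
  | O => 0
  | S b' => if Nat.leb (S b') a then 0 else sumk a b' g + g (S b')
  end.

(* DPS region with circuit power; alpha = m/N with m in {0..N}, so alpha*N = m. *)
Definition C_DPS' (N : nat) (h P zeta sA2 scov2 PS : R) (RQ : R * R) : Prop :=
  let '(Rr, Q) := RQ in
  exists m : nat, (m <= N)%nat /\
  exists rho : nat -> R,
    (forall k, (1 <= k <= N)%nat -> 0 <= rho k <= 1) /\
    0 <= Q /\
    Q <= / INR N * (sumk 0 N (fun k => rho k * zeta * h * P) - sumk m N (fun _ => PS)) /\
    Rr <= / INR N * sumk m N (fun k => frate h P sA2 scov2 (rho k)).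

Definition C_OPS' (N : nat) (h P zeta sA2 scov2 PS : R) (RQ : R * R) : Prop :=
  let '(Rr, Q) := RQ in
  exists m : nat, (m <= N)%nat /\
  let alpha := INR m / INR N in
  exists rho : R, 0 <= rho <= 1 /\
    0 <= Q /\
    Q <= alpha * zeta * h * P + (1 - alpha) * rho * zeta * h * P - (1 - alpha) * PS /\
    Rr <= (1 - alpha) * frate h P sA2 scov2 rho.

(* Main.v *)
Require Import Defs.
From Stdlib Require Import Reals Lra Lia Psatz.
Open Scope R_scope.

Lemma sumk_le0 a b g : (b <= a)%nat -> sumk a b g = 0.
Proof.
  destruct b; [reflexivity|]. intro H.
  change (sumk a (S b) g) with (if Nat.leb (S b) a then 0 else sumk a b g + g (S b)).
  destruct (Nat.leb_spec (S b) a); [reflexivity | lia].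
Qed.

Lemma sumk_S a b g : (a <= b)%nat -> sumk a (S b) g = sumk a b g + g (S b).
Proof.
  intro H.
  change (sumk a (S b) g) with (if Nat.leb (S b) a then 0 else sumk a b g + g (S b)).
  destruct (Nat.leb_spec (S b) a); [lia | reflexivity].
Qed.

Lemma sumk_ind_gen (P : nat -> R -> Prop) a g :
  P a 0 -> (forall b, (a <= b)%nat -> P b (sumk a b g) -> P (S b) (sumk a b g + g (S b))) ->
  forall b, (a <= b)%nat -> P b (sumk a b g).
Proof.
  intros H0 HS b Hb. replace b with (a + (b - a))%nat by lia.
  generalize (b - a)%nat. intro d. induction d.
  - rewrite Nat.add_0_r, sumk_le0 by lia. exact H0.
  - replace (a + S d)%nat with (S (a + d)) by lia.
    rewrite sumk_S by lia. apply HS; [lia|exact IHd].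
Qed.

Lemma sumk_le a b g1 g2 : (forall k, (a < k <= b)%nat -> g1 k <= g2 k) ->
  sumk a b g1 <= sumk a b g2.
Proof.
  intro H. destruct (Nat.le_gt_cases a b) as [Hab|Hab].
  2: rewrite !sumk_le0 by lia; lra.
  replace b with (a + (b - a))%nat in * by lia.
  generalize dependent (b - a)%nat. intros d H _. induction d.
  - rewrite Nat.add_0_r, !sumk_le0 by lia. lra.
  - replace (a + S d)%nat with (S (a + d)) in * by lia.
    rewrite !sumk_S by lia.
    assert (sumk a (a+d) g1 <= sumk a (a+d) g2) by (apply IHd; intros; apply H; lia).
    assert (g1 (S (a+d)) <= g2 (S (a+d))) by (apply H; lia). lra.
Qed.

Lemma sumk_ext a b g1 g2 : (forall k, (a < k <= b)%nat -> g1 k = g2 k) ->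
  sumk a b g1 = sumk a b g2.
Proof.
  intro H; apply Rle_antisym; apply sumk_le; intros k Hk; rewrite H by lia; lra.
Qed.

Lemma sumk_lin a b u v g : (a <= b)%nat ->
  sumk a b (fun k => u + v * g k) = INR (b - a) * u + v * sumk a b g.
Proof.
  intro Hab. replace b with (a + (b - a))%nat by lia.
  generalize (b - a)%nat. intro d. rewrite Nat.add_sub_swap, Nat.sub_diag by lia. simpl.
  induction d.
  - rewrite Nat.add_0_r, !sumk_le0 by lia. simpl. lra.
  - replace (a + S d)%nat with (S (a + d)) by lia.
    rewrite !sumk_S by lia. rewrite IHd, S_INR. ring.
Qed.

Lemma sumk_split a b c g : (a <= b)%nat -> (b <= c)%nat ->
  sumk a c g = sumk a b g + sumk b c g.
Proof.
  intros Hab Hbc. replace c with (b + (c - b))%nat by lia.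
  generalize (c - b)%nat. intro d. induction d.
  - rewrite Nat.add_0_r, (sumk_le0 b b) by lia. lra.
  - replace (b + S d)%nat with (S (b + d)) by lia.
    rewrite !sumk_S by lia. rewrite IHd. ring.
Qed.

Lemma ln_le_m1 u : 0 < u -> ln u <= u - 1.
Proof. intro H. pose proof (exp_ineq1_le (ln u)). rewrite exp_ln in H0 by lra. lra. Qed.

Lemma tangent a b c x y : 0 <= a -> 0 <= b -> 0 < c -> 0 <= x -> 0 <= y ->
  ln (1 + y * a / (y * b + c)) <=
  ln (1 + x * a / (x * b + c)) + (a * c / ((x*b+c)*(x*b+c)) / (1 + x * a / (x * b + c))) * (y - x).
Proof.
  intros Ha Hb Hc Hx Hy.
  assert (Dx : 0 < x*b+c) by nra. assert (Dy : 0 < y*b+c) by nra.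
  set (gx := x * a / (x * b + c)). set (gy := y * a / (y * b + c)).
  assert (Gx : 0 <= gx) by (unfold gx; apply Rmult_le_pos; [nra| apply Rlt_le, Rinv_0_lt_compat; lra]).
  assert (Gy : 0 <= gy) by (unfold gy; apply Rmult_le_pos; [nra| apply Rlt_le, Rinv_0_lt_compat; lra]).
  assert (E : 1 + gy = (1 + gx) * ((1+gy)/(1+gx))) by (field; lra).
  rewrite E, ln_mult by (try apply Rdiv_lt_0_compat; lra).
  pose proof (ln_le_m1 ((1+gy)/(1+gx)) ltac:(apply Rdiv_lt_0_compat; lra)).
  assert (K : gy - gx - a*c/((x*b+c)*(x*b+c)) * (y - x) =
     - (a*b*c*((y-x)*(y-x))) / ((y*b+c)*((x*b+c)*(x*b+c)))) by (unfold gx, gy; field; lra).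
  assert (K2 : 0 <= (a*b*c*((y-x)*(y-x))) / ((y*b+c)*((x*b+c)*(x*b+c)))).
  { unfold Rdiv. apply Rmult_le_pos.
    - assert (T1 : 0 <= a*b) by (apply Rmult_le_pos; lra). assert (T2 : 0 <= a*b*c) by (apply Rmult_le_pos; lra).
      apply Rmult_le_pos; [exact T2| apply Rle_0_sqr].
    - apply Rlt_le, Rinv_0_lt_compat, Rmult_lt_0_compat; nra. }
  assert (K3 : (1+gy)/(1+gx) - 1 = (gy - gx)/(1+gx)) by (field; lra).
  assert (K4 : (gy - gx)/(1+gx) <= a*c/((x*b+c)*(x*b+c)) * (y-x) / (1+gx)).
  { unfold Rdiv at 1 3. apply Rmult_le_compat_r. apply Rlt_le, Rinv_0_lt_compat; lra.
    unfold Rdiv in K. lra. }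
  unfold Rdiv at 3 in K4. unfold Rdiv. unfold Rdiv in K4, H, K3. nra.
Qed.

Lemma sumk_const a b c : (a <= b)%nat -> sumk a b (fun _ => c) = INR (b - a) * c.
Proof.
  intro H. rewrite (sumk_ext a b _ (fun k => c + 0 * (fun _ => 0) k)) by (intros; simpl; ring).
  rewrite sumk_lin by exact H. ring.
Qed.

Lemma sumk_scal a b v g : (a <= b)%nat -> sumk a b (fun k => v * g k) = v * sumk a b g.
Proof.
  intro H. rewrite (sumk_ext a b _ (fun k => 0 + v * g k)) by (intros; ring).
  rewrite sumk_lin by exact H. ring.
Qed.

Lemma frate_tan h P sA2 scov2 rb : 0 <= h -> 0 <= P -> 0 <= sA2 -> 0 < scov2 ->
  0 <= rb <= 1 -> exists T, forall r, 0 <= r <= 1 ->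
  frate h P sA2 scov2 r <= (frate h P sA2 scov2 rb + T * rb) + (- T) * r.
Proof.
  intros H H0 H1 H2 H4.
  set (K := (h * P * scov2 / (((1 - rb) * sA2 + scov2) * ((1 - rb) * sA2 + scov2)) /
          (1 + (1 - rb) * (h * P) / ((1 - rb) * sA2 + scov2)))).
  exists (K / ln 2). intros r H3. pose proof (tangent (h*P) sA2 scov2 (1-rb) (1-r) ltac:(nra) H1 H2 ltac:(lra) ltac:(lra)) as Tg.
  fold K in Tg. unfold frate, log2.
  pose proof ln_lt_2.
  rewrite !Rmult_assoc with (r1 := (1 - _)).
  assert (E : forall u v, u <= v -> u / ln 2 <= v / ln 2).
  { intros u v Huv. unfold Rdiv. apply Rmult_le_compat_r; [apply Rlt_le, Rinv_0_lt_compat; lra|exact Huv]. }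
  apply Rle_trans with ((ln (1 + (1 - rb) * (h * P) / ((1 - rb) * sA2 + scov2)) + K * (1 - r - (1 - rb))) / ln 2).
  - apply E. exact Tg.
  - right. field. lra.
Qed.

Theorem proposition2 (h zeta sA2 scov2 PS : R) (N : nat)
  (hh : 0 < h) (hz : 0 < zeta <= 1) (hA : 0 <= sA2) (hc : 0 < scov2)
  (hPS : 0 < PS) (hN : (1 <= N)%nat) :
  forall P : R, 0 <= P ->
  forall RQ : R * R,
    C_DPS' N h P zeta sA2 scov2 PS RQ <-> C_OPS' N h P zeta sA2 scov2 PS RQ.
Proof.
  intros P HP [Rr Q]. unfold C_DPS', C_OPS'.
  assert (HNp : 0 < INR N) by (apply lt_0_INR; lia).
  assert (HiN : 0 < / INR N) by (apply Rinv_0_lt_compat; lra).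
  assert (zhP : 0 <= zeta * h * P) by (apply Rmult_le_pos; [nra|lra]).
  split.
  - intros [m [Hm [rho [Hrho [HQ0 [HQ HR]]]]]].
    assert (Hsplit : sumk 0 N (fun k => rho k * zeta * h * P) =
        sumk 0 m (fun k => rho k * zeta * h * P) + sumk m N (fun k => rho k * zeta * h * P))
      by (apply sumk_split; lia).
    assert (H0m : sumk 0 m (fun k => rho k * zeta * h * P) <= INR m * (zeta * h * P)).
    { replace (INR m) with (INR (m - 0)) by (f_equal; lia).
      rewrite <- sumk_const by lia. apply sumk_le. intros k Hk.
      specialize (Hrho k ltac:(lia)). nra. }
    assert (HmN : sumk m N (fun k => rho k * zeta * h * P) = (zeta * h * P) * sumk m N rho).
    { rewrite <- sumk_scal by lia. apply sumk_ext. intros; ring. }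
    assert (HPS : sumk m N (fun _ => PS) = INR (N - m) * PS) by (apply sumk_const; lia).
    assert (Hnm : INR (N - m) = INR N - INR m) by (apply minus_INR; lia).
    destruct (Nat.eq_dec m N) as [->|Hne].
    + exists N. split; [lia|]. exists 0. split; [lra|]. split; [exact HQ0|].
      rewrite (sumk_le0 N N) in HR, Hsplit by lia.
      rewrite Nat.sub_diag in HPS. simpl in HPS.
      replace (INR N / INR N) with 1 by (field; lra).
      split.
      * apply Rle_trans with (1 := HQ). rewrite Hsplit, HPS.
        apply Rle_trans with (/ INR N * (INR N * (zeta * h * P))).
        { apply Rmult_le_compat_l; lra. }
        right. field. lra.
      * lra.
    + assert (Hlt : (m < N)%nat) by lia.
      assert (Hn : 0 < INR N - INR m) by (rewrite <- Hnm; apply lt_0_INR; lia).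
      set (S := sumk m N rho) in *.
      assert (HS : 0 <= S <= INR N - INR m).
      { rewrite <- Hnm. split.
        - replace 0 with (sumk m N (fun _ => 0)) by (rewrite sumk_const by lia; ring).
          apply sumk_le. intros k Hk. specialize (Hrho k ltac:(lia)). lra.
        - replace (INR (N - m)) with (sumk m N (fun _ => 1)) by (rewrite sumk_const by lia; ring).
          apply sumk_le. intros k Hk. specialize (Hrho k ltac:(lia)). lra. }
      set (rb := S / (INR N - INR m)).
      assert (Hrb : 0 <= rb <= 1).
      { unfold rb. split.
        - apply Rmult_le_pos; [lra|apply Rlt_le, Rinv_0_lt_compat; lra].
        - apply Rmult_le_reg_r with (INR N - INR m); [lra|].
          unfold Rdiv. rewrite Rmult_assoc, Rinv_l by lra. lra. }
      exists m. split; [lia|]. exists rb. split; [exact Hrb|]. split; [exact HQ0|]. split.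
      * apply Rle_trans with (1 := HQ). rewrite Hsplit, HmN, HPS, Hnm.
        apply Rle_trans with (/ INR N * (INR m * (zeta * h * P) + zeta * h * P * S - (INR N - INR m) * PS)).
        { apply Rmult_le_compat_l; lra. }
        right. unfold rb. field. lra.
      * destruct (frate_tan h P sA2 scov2 rb ltac:(lra) HP hA hc Hrb) as [T HT].
        apply Rle_trans with (1 := HR).
        apply Rle_trans with (/ INR N * sumk m N (fun k => (frate h P sA2 scov2 rb + T * rb) + (- T) * rho k)).
        { apply Rmult_le_compat_l; [lra|]. apply sumk_le. intros k Hk. apply HT, Hrho. lia. }
        rewrite sumk_lin by lia. fold S. rewrite Hnm.
        right. unfold rb. field. lra.
  - intros [m [Hm [r [Hr [HQ0 [HQ HR]]]]]].
    exists m. split; [exact Hm|].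
    exists (fun k => if Nat.leb k m then 1 else r).
    assert (Hnm : INR (N - m) = INR N - INR m) by (apply minus_INR; lia).
    split; [intros k _; destruct (Nat.leb k m); lra|]. split; [exact HQ0|].
    split.
    + rewrite (sumk_split 0 m N) by lia.
      rewrite (sumk_ext 0 m _ (fun _ => zeta * h * P)).
      2:{ intros k Hk. destruct (Nat.leb_spec k m); [ring|lia]. }
      rewrite (sumk_ext m N (fun k => (if Nat.leb k m then 1 else r) * zeta * h * P) (fun _ => r * zeta * h * P)).
      2:{ intros k Hk. destruct (Nat.leb_spec k m); [lia|ring]. }
      rewrite !sumk_const by lia. rewrite Hnm, Nat.sub_0_r.
      apply Rle_trans with (1 := HQ). right. field. lra.
    + rewrite (sumk_ext m N _ (fun _ => frate h P sA2 scov2 r)).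
      2:{ intros k Hk. destruct (Nat.leb_spec k m); [lia|reflexivity]. }
      rewrite sumk_const by lia. rewrite Hnm.
      apply Rle_trans with (1 := HR). right. field. lra.
Qed.
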